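(* Let $V$ be a set of $n$ points in $\mathbb{R}^2$, $O\in\mathbb{R}^2$, and $M,k$ positive integers. Sort $V$ as $u_1,\dots,u_n$ with $\theta(u_1)\le\cdots\le\theta(u_n)$, and for $1\le i\le\lceil n/(Mk)\rceil$ let $V_i=\{u_j:(i-1)Mk<j\le iMk\}$. Define $Y_i$ as follows: if $\max_{v\in V_i}\theta(v)-\min_{v\in V_i}\theta(v)\le\pi$, let $Y_i$ be the interior of the convex hull of $V_i\cup\{O\}$; otherwise let $Y_i$ be the exterior of the convex hull of $(V\setminus V_i)\cup\{O\}$. Then for any $1\le i<j\le\lceil n/(Mk)\rceil$, the sets $Y_i$ and $Y_j$ do not intersect.
   Context: $\theta(v)\in[0,2\pi)$ denotes the polar angle of the point $v$ with respect to $O$. *)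

(* Defs.v *)
From HB Require Import structures.
From mathcomp Require Import all_boot all_order all_algebra.
From mathcomp Require Import all_classical all_reals all_analysis.
Set Implicit Arguments. Unset Strict Implicit. Unset Printing Implicit Defensive.
Import Order.TTheory GRing.Theory Num.Theory.
Import numFieldNormedType.Exports.
Local Open Scope classical_set_scope.
Local Open Scope ring_scope.

Notation point R := 'rV[R]_2.

Definition px {R : realType} (v : point R) : R := v ord0 ord0.
Definition py {R : realType} (v : point R) : R := v ord0 ord_max.

(* polar angle of v with respect to O, in [0, 2 pi); convention theta O v = 0 if v = O *)
Definition theta {R : realType} (O v : point R) : R :=
  let x := px v - px O in
  let y := py v - py O in
  let r := Num.sqrt (x ^+ 2 + y ^+ 2) in
  if r == 0 then 0
  else if 0 <= y then acos (x / r) else 2 * pi - acos (x / r).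

Definition convex_hull {R : realType} (A : set (point R)) : set (point R) :=
  [set x | exists (m : nat) (p : 'I_m -> point R) (l : 'I_m -> R),
     (forall i, A (p i)) /\ (forall i, 0 <= l i) /\
     \sum_(i < m) l i = 1 /\ x = \sum_(i < m) l i *: p i].

Definition exterior {T : topologicalType} (A : set T) : set T := interior (~` A).

(* the i-th block (1-indexed) of size d of the sorted sequence s *)
Definition block {T : Type} (d i : nat) (s : seq T) : seq T :=
  take d (drop ((i - 1) * d) s).

Definition max_theta {R : realType} (O : point R) (B : seq (point R)) : R :=
  \big[Order.max/0]_(v <- B) theta O v.
Definition min_theta {R : realType} (O : point R) (B : seq (point R)) : R :=
  \big[Order.min/(2 * pi)]_(v <- B) theta O v.

(* the region Y_i, for V (given as its theta-sorted enumeration s) and block size d = M k *)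
Definition Yset {R : realType} (O : point R) (s : seq (point R)) (d i : nat)
  : set (point R) :=
  let Vi := block d i s in
  if max_theta O Vi - min_theta O Vi <= pi
  then interior (convex_hull ([set v | v \in Vi] `|` [set O]))
  else exterior (convex_hull (([set v | v \in s] `\` [set v | v \in Vi]) `|` [set O])).

(* Main.v *)
Require Import Defs.
From HB Require Import structures.
From mathcomp Require Import all_boot all_order all_algebra.
From mathcomp Require Import all_classical all_reals all_analysis.
From mathcomp Require Import ring lra zify.
Import Order.TTheory GRing.Theory Num.Theory.
Import numFieldNormedType.Exports.
Set Implicit Arguments. Unset Strict Implicit.
Local Open Scope classical_set_scope.
Local Open Scope ring_scope.

Section S.
Variable R : realType.
Implicit Types O v : 'rV[R]_2.

Lemma sqr_eq_pos (a b : R) : 0 <= a -> 0 <= b -> a ^+ 2 = b ^+ 2 -> a = b.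
Proof. move=> a0 b0 h; apply/eqP; rewrite -(eqrXn2 (n:=2)) //; exact/eqP. Qed.

Lemma theta_polar O v :
  px v - px O = Num.sqrt ((px v - px O) ^+ 2 + (py v - py O) ^+ 2) * cos (theta O v) /\
  py v - py O = Num.sqrt ((px v - px O) ^+ 2 + (py v - py O) ^+ 2) * sin (theta O v) /\
  0 <= theta O v <= 2 * pi.
Proof.
rewrite /theta; set x := px v - px O; set y := py v - py O.
set r := Num.sqrt _.
have r0 : 0 <= r by rewrite sqrtr_ge0.
have r2 : r ^+ 2 = x ^+ 2 + y ^+ 2 by rewrite sqr_sqrtr // addr_ge0 // sqr_ge0.
have pi0 : 0 < pi :> R := pi_gt0 R.
case: eqP => [rz|/eqP rn0].
  rewrite rz !mul0r; rewrite rz in r2.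
  have hx : x = 0 by nra.
  have hy : y = 0 by nra.
  by rewrite hx hy; split => //; split => //; rewrite lexx /=; lra.
have rp : 0 < r by rewrite lt_neqAle eq_sym rn0 r0.
have zb : -1 <= x / r <= 1.
  rewrite ler_pdivrMr // ler_pdivlMr //; apply/andP; split; nra.
have [/andP [A0 Api] cA] := acos_def zb.
have sA : sin (acos (x / r)) ^+ 2 = 1 - (x / r) ^+ 2.
  by rewrite sin2cos2 cA.
have sA0 : 0 <= sin (acos (x / r)) by rewrite sin_acos // sqrtr_ge0.
have key : (r * sin (acos (x / r))) ^+ 2 = y ^+ 2.
  rewrite exprMn sA mulrBr mulr1 expr_div_n mulrCA mulfV ?mulr1; last first.
    by rewrite expf_neq0.
  rewrite r2; ring.
have rS0 : 0 <= r * sin (acos (x / r)) by rewrite mulr_ge0.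
have xr : x = r * (x / r) by rewrite mulrCA mulfV // mulr1.
case: ifP => y0.
  rewrite cA; split => //; split; last by apply/andP; split => //; lra.
  by apply: sqr_eq_pos.
have c2 : cos (2 * pi) = 1 :> R by rewrite mulr_natl cos2pi.
have s2 : sin (2 * pi) = 0 :> R by rewrite mulr_natl sin2pi.
rewrite cosB sinB c2 s2 cA !mul1r !mul0r ?add0r ?addr0 ?sub0r ?subr0.
split => //; split; last by apply/andP; split; lra.
have : - y = r * sin (acos (x / r)).
  apply: sqr_eq_pos => //; last by rewrite sqrrN.
  by rewrite oppr_ge0 ltW // ltNge y0.
by rewrite mulrN => <-; rewrite opprK.
Qed.

Definition hs O (ss cc : R) v := (py v - py O) * cc - (px v - px O) * ss.

Lemma hs_sin O c v : hs O (sin c) (cos c) v =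
  Num.sqrt ((px v - px O) ^+ 2 + (py v - py O) ^+ 2) * sin (theta O v - c).
Proof.
have [hx [hy _]] := theta_polar O v.
rewrite /hs sinB; set r := Num.sqrt _ in hx hy *.
rewrite [in LHS]hx [in LHS]hy; ring.
Qed.

Lemma hsN O ss cc v : hs O (- ss) (- cc) v = - hs O ss cc v.
Proof. rewrite /hs; ring. Qed.

Lemma sin_le0_neg (t : R) : - pi <= t <= 0 -> sin t <= 0.
Proof.
move=> /andP [h1 h2]; rewrite -(opprK t) sinN oppr_le0; apply: sin_ge0_pi.
apply/andP; split; lra.
Qed.

Lemma sin_le0_pi2 (t : R) : pi <= t <= 2 * pi -> sin t <= 0.
Proof.
move=> /andP [h1 h2].
have -> : t = (t - pi) + pi by ring.
rewrite sinDpi oppr_le0; apply: sin_ge0_pi; apply/andP; split; lra.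
Qed.

Lemma hull_hs O ss cc (A : set 'rV[R]_2) :
  (forall p, A p -> 0 <= hs O ss cc p) ->
  convex_hull (A `|` [set O]) `<=` [set x | 0 <= hs O ss cc x].
Proof.
move=> hA x [m [p [l [Ap [l0 [l1 ->]]]]]] /=.
have E : \sum_(i < m) l i * hs O ss cc (p i) =
  (\sum_(i < m) l i * py (p i)) * cc - (\sum_(i < m) l i * px (p i)) * ss
  - (\sum_(i < m) l i) * (py O * cc - px O * ss).
  by rewrite !mulr_suml -!sumrB; apply: eq_bigr => i _; rewrite /hs; ring.
have -> : hs O ss cc (\sum_(i < m) l i *: p i) =
   \sum_(i < m) l i * hs O ss cc (p i).
  have sx : forall j, (\sum_(k < m) l k *: p k) ord0 j = \sum_(k < m) l k * p k ord0 j.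
    by move=> j; rewrite summxE; apply: eq_bigr => k _; rewrite mxE.
  rewrite E l1 mul1r /hs /px /py !sx; ring.
apply: sumr_ge0 => i _; apply: mulr_ge0 => //.
case: (Ap i) => [/hA //|->]; rewrite /hs !subrr; lra.
Qed.

Lemma int_hs_disj O ss cc x : ss ^+ 2 + cc ^+ 2 = 1 ->
  interior [set y | 0 <= hs O ss cc y] x ->
  interior [set y | hs O ss cc y <= 0] x -> False.
Proof.
move=> n1 h1 h2.
have : interior ([set y | 0 <= hs O ss cc y] `&` [set y | hs O ss cc y <= 0]) x.
  by rewrite interiorI.
rewrite /interior => /nbhs_ballP [e e0 sub].
pose w : 'rV[R]_2 := \row_j (if j == ord0 then - ss else cc).
pose t := e / (2 * (`|w| + 1)).
have w0 : 0 <= `|w| by [].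
have t0 : 0 < t by rewrite /t divr_gt0 // mulr_gt0 //; lra.
have tw : t * (`|w| + 1) = e / 2 by rewrite /t; field; lra.
have hw : forall (a : R) y, hs O ss cc (y + a *: w) = hs O ss cc y + a.
  move=> a y; rewrite /hs /px /py !mxE /=.
  rewrite -[a in RHS]mulr1 -n1; ring.
have bx : ball x e x by apply: ballxx.
have bY : ball x e (x + t *: w).
  rewrite -ball_normE /ball_ /= opprD addrA subrr sub0r normrN normrZ gtr0_norm //.
  nra.
have [a1 a2] := sub _ bx; have [b1 b2] := sub _ bY.
move: b1 b2; rewrite /= hw => b1 b2.
move: a1 a2 => /= a1 a2; lra.
Qed.

Lemma theta_ge0 O v : 0 <= theta O v.
Proof. by have [_ [_ /andP [h _]]] := theta_polar O v. Qed.
Lemma theta_le2pi O v : theta O v <= 2 * pi.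
Proof. by have [_ [_ /andP [_ h]]] := theta_polar O v. Qed.

Lemma max_cons O u B : max_theta O (u :: B) = Order.max (theta O u) (max_theta O B).
Proof. by rewrite /max_theta big_cons. Qed.
Lemma min_cons O u B : min_theta O (u :: B) = Order.min (theta O u) (min_theta O B).
Proof. by rewrite /min_theta big_cons. Qed.

Lemma max_ge O B v : v \in B -> theta O v <= max_theta O B.
Proof.
elim: B => //= u B IH; rewrite inE /max_theta big_cons -/(max_theta O B).
by case/orP => [/eqP->|/IH h]; rewrite le_max ?lexx ?h ?orbT.
Qed.

Lemma min_le O B v : v \in B -> min_theta O B <= theta O v.
Proof.
elim: B => //= u B IH; rewrite inE /min_theta big_cons -/(min_theta O B).
by case/orP => [/eqP->|/IH h]; rewrite ge_min ?lexx ?h ?orbT.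
Qed.

Lemma max_cases O B : max_theta O B = 0 \/ exists2 v, v \in B & max_theta O B = theta O v.
Proof.
elim: B => [|u B IH]; first by left; rewrite /max_theta big_nil.
rewrite max_cons.
have [h|h] := leP (theta O u) (max_theta O B).
  case: IH => [->|[v vB ->]]; first by left.
  by right; exists v => //; rewrite inE vB orbT.
by right; exists u => //; rewrite inE eqxx.
Qed.

Lemma min_cases O B : min_theta O B = 2 * pi \/ exists2 v, v \in B & min_theta O B = theta O v.
Proof.
elim: B => [|u B IH]; first by left; rewrite /min_theta big_nil.
rewrite min_cons.
have [h|h] := leP (theta O u) (min_theta O B).
  by right; exists u => //; rewrite inE eqxx.
case: IH => [->|[v vB ->]]; first by left.
by right; exists v => //; rewrite inE vB orbT.
Qed.

Lemma min_ge0 O B : 0 <= min_theta O B.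
Proof.
have pi0 : 0 < pi :> R := pi_gt0 R.
case: (min_cases O B) => [->|[v _ ->]]; [lra | exact: theta_ge0].
Qed.

Lemma spread_big O B : ~~ (max_theta O B - min_theta O B <= pi) ->
  exists u, exists2 u', (u \in B) /\ (u' \in B) & pi < theta O u' - theta O u.
Proof.
rewrite -ltNge => h.
have pi0 : 0 < pi :> R := pi_gt0 R.
have m0 := min_ge0 O B.
case: (max_cases O B) => [e|[u' u'B e]]; first by rewrite e in h; lra.
case: (min_cases O B) => [e'|[u uB e']].
  by rewrite e e' in h; have := theta_le2pi O u'; lra.
by exists u, u' => //; rewrite -e -e'.
Qed.

Lemma hs_ge0 O c v : 0 <= sin (theta O v - c) -> 0 <= hs O (sin c) (cos c) v.
Proof. by move=> h; rewrite hs_sin mulr_ge0 // sqrtr_ge0. Qed.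
Lemma hs_le0 O c v : sin (theta O v - c) <= 0 -> hs O (sin c) (cos c) v <= 0.
Proof. by move=> h; rewrite hs_sin mulr_ge0_le0 // sqrtr_ge0. Qed.

Lemma hull_hs_le O ss cc (A : set 'rV[R]_2) :
  (forall p, A p -> hs O ss cc p <= 0) ->
  convex_hull (A `|` [set O]) `<=` [set x | hs O ss cc x <= 0].
Proof.
move=> h x /(@hull_hs O (- ss) (- cc) A) /=; rewrite hsN oppr_ge0; apply.
by move=> p /h; rewrite hsN oppr_ge0.
Qed.

Lemma sep_interior O (A B : set 'rV[R]_2) ss cc : ss ^+ 2 + cc ^+ 2 = 1 ->
  (forall p, A p -> 0 <= hs O ss cc p) -> (forall p, B p -> hs O ss cc p <= 0) ->
  interior (convex_hull (A `|` [set O])) `&` interior (convex_hull (B `|` [set O])) = set0.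
Proof.
move=> n1 hA hB; apply/seteqP; split => // x [xa xb].
exfalso; apply: (@int_hs_disj O ss cc x n1); [exact: interiorS (@hull_hs O ss cc A hA) _ xa | exact: interiorS (@hull_hs_le O ss cc B hB) _ xb].
Qed.

Lemma hull_mono (A B : set 'rV[R]_2) : A `<=` B -> convex_hull A `<=` convex_hull B.
Proof.
move=> AB x [m [p [l [Ap H]]]]; exists m, p, l; split => // i; exact: AB.
Qed.

Lemma int_ext O (A B : set 'rV[R]_2) : A `<=` B ->
  interior (convex_hull (A `|` [set O])) `&` exterior (convex_hull (B `|` [set O])) = set0.
Proof.
move=> AB; apply/seteqP; split => // x [/interior_subset xa /interior_subset xb].
apply: xb; apply: hull_mono xa; move=> y [/AB|]; [left|right] => //.
Qed.

End S.

Lemma block_split (T : eqType) d i j (s : seq T) u w : (1 <= i)%N -> (i < j)%N ->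
  u \in block d i s -> w \in block d j s -> u \in take (i * d) s /\ w \in drop (i * d) s.
Proof.
move=> i1 ij; rewrite /block => hu hw; split.
  have -> : (i * d = (i - 1) * d + d)%N by rewrite -mulSnr; congr (_ * _)%N; lia.
  by rewrite takeD mem_cat hu orbT.
have := mem_take hw.
have -> : ((j - 1) * d = ((j - 1) * d - i * d) + i * d)%N.
  rewrite subnK //; apply: leq_mul => //; lia.
by rewrite -drop_drop => /mem_drop.
Qed.

Theorem lemma12 (R : realType) (V : seq 'rV[R]_2) (O : 'rV[R]_2) (M k : nat)
  (s : seq 'rV[R]_2) :
  uniq V -> (0 < M)%N -> (0 < k)%N ->
  perm_eq s V -> sorted (fun a b => theta O a <= theta O b) s ->
  forall i j : nat, (1 <= i)%N -> (i < j)%N ->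
    (j <= (size V + M * k - 1) %/ (M * k))%N ->
    Yset O s (M * k) i `&` Yset O s (M * k) j = set0.
Proof.
move=> uV M0 k0 pe so i j i1 ij _.
set d := (M * k)%N.
have us : uniq s by rewrite (perm_uniq pe).
have tr : transitive (fun a b : 'rV[R]_2 => theta O a <= theta O b).
  by move=> ? ? ?; apply: le_trans.
have ps := so; rewrite (sorted_pairwise tr) -(cat_take_drop (i * d) s) pairwise_cat in ps.
case/and3P: ps => /allrelP ps _ _.
rewrite -(cat_take_drop (i * d) s) cat_uniq in us; case/and3P: us => _ us _.
set Bi := block d i s; set Bj := block d j s.
have ord : forall u w, u \in Bi -> w \in Bj -> theta O u <= theta O w.
  by move=> u w hu hw; have [h1 h2] := @block_split _ d i j s _ _ i1 ij hu hw; exact: ps.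
have disj : forall x, x \in Bi -> x \in Bj -> False.
  move=> x hu hw; have [h1 h2] := @block_split _ d i j s _ _ i1 ij hu hw.
  by move/negP: us; apply; apply/hasP; exists x.
have inS : forall x B, x \in take d (drop B s) -> x \in s.
  by move=> x B /mem_take /mem_drop.
have pi0 : 0 < pi :> R := pi_gt0 R.
rewrite /Yset -/Bi -/Bj.
case: ifP => hi; case: ifP => hj.
- set a := min_theta O Bi; set c := min_theta O Bj.
  have a0 : 0 <= a := min_ge0 O Bi.
  have vA : forall v, v \in Bi -> [/\ a <= theta O v, theta O v <= a + pi & theta O v <= c].
    move=> v hv; have h1 := min_le O hv; have h2 := max_ge O hv.
    split => //; first by rewrite /a; lra.
    rewrite /c; case: (min_cases O Bj) => [->|[w hw ->]]; last exact: ord.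
    exact: theta_le2pi.
  have wB : forall w, w \in Bj -> [/\ c <= theta O w, theta O w <= c + pi & theta O w <= 2 * pi].
    move=> w hw; have h1 := min_le O hw; have h2 := max_ge O hw.
    split => //; last exact: theta_le2pi; rewrite /c; lra.
  case: (lerP (c - a) pi) => ca.
    rewrite setIC; apply: (sep_interior (O := O) (A := [set v | v \in Bj]) (B := [set v | v \in Bi]) (ss := sin c) (cc := cos c)).
    + by rewrite addrC cos2Dsin2.
    + move=> w /wB [h1 h2 h3]; apply: hs_ge0; apply: sin_ge0_pi; apply/andP; split; lra.
    + move=> v /vA [h1 h2 h3]; apply: hs_le0; apply: sin_le0_neg; apply/andP; split; lra.
  apply: (sep_interior (O := O) (A := [set v | v \in Bi]) (B := [set v | v \in Bj]) (ss := sin a) (cc := cos a)).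
  + by rewrite addrC cos2Dsin2.
  + move=> v /vA [h1 h2 h3]; apply: hs_ge0; apply: sin_ge0_pi; apply/andP; split; lra.
  + move=> w /wB [h1 h2 h3]; apply: hs_le0; apply: sin_le0_pi2; apply/andP; split; lra.
- apply: int_ext => x /= hx; split; [exact: inS hx | by move=> /= hx'; exact: disj hx hx'].
- rewrite setIC; apply: int_ext => x /= hx; split; [exact: inS hx | by move=> /= hx'; exact: disj hx' hx].
- have [u [u' [hu hu'] h1]] := spread_big (negbT hi).
  have [w [w' [hw hw'] h2]] := spread_big (negbT hj).
  exfalso;   have := ord _ _ hu' hw; have := theta_ge0 O u; have := theta_le2pi O w'.
  lra.
Qed.
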